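(* Let $\mathcal M$ be a valid catalytic machine with work space $s=s(n)$ and catalytic space $c=c(n)$, where $\log n\le s\le c\le 2^s$, and fix an input $x$. Then $$\mathbb E_{\tau\in\{0,1\}^c}\big[|V(\mathcal G^0_{\mathcal M,x}(\mathrm{acc}_\tau))|\big]\le 2^s\quad\text{and}\quad \mathbb E_{\tau\in\{0,1\}^c}\big[|V(\mathcal G^0_{\mathcal M,x}(\mathrm{rej}_\tau))|\big]\le 2^s,$$ where $\tau$ is uniform.
   Context: A catalytic machine has a read-only input tape holding $x$, a work tape of length $s$ initialized to $0^s$, a catalytic tape of length $c$ initialized to arbitrary $\tau$; non-deterministic/randomized machines have at each step a 0-choice and a 1-choice of transition (deterministic transitions count as both). It is valid if for every $x,\tau$ and every sequence of choices it halts in finite time with catalytic tape $\tau$. Convention: all auxiliary configuration information (internal state, head positions) is recorded on the work tape, so every configuration is a pair $\langle\pi,u\rangle$ with catalytic tape content $\pi\in\{0,1\}^c$ and work tape content $u\in\{0,1\}^s$; the start configuration is $\langle\tau,0^s\rangle$, the unique accepting halt configuration is $\mathrm{acc}_\tau=\langle\tau,1\,1\,0^{s-2}\rangle$ and the unique rejecting halt configuration is $\mathrm{rej}_\tau=\langle\tau,1\,0\,0^{s-2}\rangle$. The configuration graph $\mathcal G_{\mathcal M,x}$ has all configurations as vertices and a directed edge from $v$ to $v'$ when $v'$ is reached from $v$ in one step, labeled by the choice bit(s) ($b$ for a $b$-choice, both 0 and 1 for deterministic steps). The $0$-graph $\mathcal G^0_{\mathcal M,x}$ is the undirected graph keeping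 only edges labeled $0$ and forgetting directions; $\mathcal G^0_{\mathcal M,x}(v)$ denotes the connected component of $v$ in it. *)

(* Defs.v *)
From mathcomp Require Import all_boot all_algebra.
Set Implicit Arguments. Unset Strict Implicit. Unset Printing Implicit Defensive.
Import GRing.Theory Num.Theory.

Notation ctape c := {ffun 'I_c -> bool}.
Notation wtape s := {ffun 'I_s -> bool}.
Notation cfg s c := (ctape c * wtape s)%type.

Definition zero_work (s : nat) : wtape s := [ffun => false].
Definition acc_work (s : nat) : wtape s := [ffun i => (val i == 0) || (val i == 1)].
Definition rej_work (s : nat) : wtape s := [ffun i => val i == 0].

Definition start_cfg s c (tau : ctape c) : cfg s c := (tau, zero_work s).
Definition acc_cfg s c (tau : ctape c) : cfg s c := (tau, acc_work s).
Definition rej_cfg s c (tau : ctape c) : cfg s c := (tau, rej_work s).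

Definition is_halt s c (v : cfg s c) : bool :=
  (v.2 == acc_work s) || (v.2 == rej_work s).

(* A machine on a fixed input is given by its one-step transition:
   step v b = Some v' means v' is reached from v by the b-choice
   (a deterministic step has step v false = step v true);
   step v b = None means v is a halting configuration (no transition). *)
Definition step_fun s c := cfg s c -> bool -> option (cfg s c).

Definition halts_exactly_at_halt s c (step : step_fun s c) : Prop :=
  forall v b, (step v b == None) = is_halt v.

Fixpoint exec s c (step : step_fun s c) (tau : ctape c) (f : nat -> bool) (k : nat)
  : option (cfg s c) :=
  match k with
  | 0 => Some (start_cfg s tau)
  | k'.+1 => obind (fun v => step v (f k')) (exec step tau f k')
  end.

Definition valid_run s c (step : step_fun s c) : Prop :=
  forall (tau : ctape c) (f : nat -> bool),
    exists k v, exec step tau f k = Some v /\ is_halt v /\ v.1 = tau.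

Definition valid_machine s c (step : step_fun s c) : Prop :=
  halts_exactly_at_halt step /\ valid_run step.

(* undirected 0-graph: edges labelled 0, directions forgotten *)
Definition zero_edge s c (step : step_fun s c) : rel (cfg s c) :=
  fun v w => (step v false == Some w) || (step w false == Some v).

Definition comp0 s c (step : step_fun s c) (v : cfg s c) : {set cfg s c} :=
  [set w | connect (zero_edge step) v w].

Definition Exp_unif (c : nat) (F : ctape c -> nat) : rat :=
  (\sum_(tau : ctape c) (F tau)%:R) / (#|{: ctape c}|)%:R.

(* Main.v *)
Require Import Defs.
From mathcomp Require Import all_boot all_algebra.
Import GRing.Theory Num.Theory.
Local Open Scope ring_scope.

Section Gen.
Variable T : finType.
Variable f : T -> option T.
Definition ge : rel T := fun v w => (f v == Some w) || (f w == Some v).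
Definition gg (v : T) : T := if f v is Some w then w else v.

Lemma ge_sym : symmetric ge.
Proof. by move=> v w; rewrite /ge orbC. Qed.

Lemma reach_step a v w : f a = None -> f v = Some w ->
  fconnect gg v a = fconnect gg w a.
Proof.
move=> fa fv; have gv : gg v = w by rewrite /gg fv.
apply/idP/idP.
- move=> H; have := iter_findex H.
  case E: (findex gg v a) => [|k].
    by move=> /= ev; rewrite ev fa in fv.
  move=> Ha; rewrite -Ha iterSr gv; apply: fconnect_iter.
- move=> H; have := iter_findex H => <-.
  rewrite -gv -iterSr; exact: fconnect_iter.
Qed.

Lemma sinks_disconnected a b : f a = None -> f b = None -> a != b ->
  ~~ connect ge a b.
Proof.
move=> fa fb ab; apply/negP => Hc.
have cl : closed ge (fun v => fconnect gg v a).
  move=> v w /orP[/eqP fv | /eqP fw].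
    exact: reach_step.
  symmetry; exact: (reach_step _ _ _ fa fw).
have := closed_connect cl Hc.
rewrite /in_mem /= connect0 => /esym Hb.
have := iter_findex Hb.
have gb : gg b = b by rewrite /gg fb.
have -> : forall n, iter n gg b = b by elim=> //= n ->.
by move=> eb; rewrite eb eqxx in ab.
Qed.

Lemma sum_comp (I : finType) (h : I -> T) : injective h ->
  (forall i, f (h i) = None) ->
  (\sum_i #|[set w | connect ge (h i) w]| <= #|T|)%N.
Proof.
move=> hinj hs.
have -> : (\sum_i #|[set w | connect ge (h i) w]| =
   \sum_i \sum_(w : T) (w \in [set w | connect ge (h i) w]))%N.
  by apply: eq_bigr => i _; rewrite -sum1_card big_mkcond /=; apply: eq_bigr => w _; case: (_ \in _).
rewrite exchange_big /= -[X in (_ <= X)%N]sum1_card.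
apply: leq_sum => w _.
rewrite -big_mkcond /= sum1_card.
apply/card_le1_eqP => i j Hi Hj.
have Hi2 : connect ge (h i) w by move: Hi; rewrite unfold_in /= => H; move: (H : w \in [set w0 | connect ge (h i) w0]); rewrite inE.
have Hj2 : connect ge (h j) w by move: Hj; rewrite unfold_in /= => H; move: (H : w \in [set w0 | connect ge (h j) w0]); rewrite inE.
apply/eqP; apply: contraT => nij.
have : h i != h j by apply: contra nij => /eqP /hinj ->.
move=> /(sinks_disconnected _ _ (hs i) (hs j)) /negP H; case: H.
apply: connect_trans Hi2 _; rewrite (sym_connect_sym ge_sym); exact: Hj2.
Qed.
End Gen.

Lemma bound_gen s c (step : step_fun s c) (h : ctape c -> cfg s c) :
  injective h -> (forall tau, step (h tau) false = None) ->
  Exp_unif (fun tau : ctape c => #|comp0 step (h tau)|) <= (2 ^ s)%:R.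
Proof.
move=> hinj hs.
have := @sum_comp _ (step ^~ false) _ h hinj hs.
rewrite card_prod [#|{: wtape s}|]card_ffun card_bool card_ord => H.
rewrite /Exp_unif -natr_sum.
have pos : 0 < (#|{: ctape c}|)%:R :> rat.
  by rewrite ltr0n card_ffun card_bool expn_gt0.
rewrite ler_pdivrMr // -natrM ler_nat mulnC.
apply: leq_trans H; apply: leq_sum => tau _; by [].
Qed.

Theorem lemma4p7 (n s c : nat)
  (M : seq bool -> step_fun s c) (x : seq bool) :
  size x = n ->
  (trunc_log 2 n <= s)%N -> (s <= c)%N -> (c <= 2 ^ s)%N ->
  (forall x' : seq bool, size x' = n -> valid_machine (M x')) ->
  Exp_unif (fun tau : ctape c => #|comp0 (M x) (acc_cfg s tau)|) <= (2 ^ s)%:R /\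
  Exp_unif (fun tau : ctape c => #|comp0 (M x) (rej_cfg s tau)|) <= (2 ^ s)%:R.
Proof.
move=> sx _ _ _ /(_ x sx) [hh _].
split; apply: bound_gen.
- by move=> t1 t2 [].
- by move=> tau; apply/eqP; rewrite hh /is_halt eqxx.
- by move=> t1 t2 [].
- by move=> tau; apply/eqP; rewrite hh /is_halt eqxx orbT.
Qed.
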